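(* A (finite) tree $T$ is semi--H--cordial if and only if $T$ has an odd number of vertices.
   Context: A labeling of a graph $G$ is a map $f:E(G)\to\{-1,+1\}$. Given a labeling $f$, for each vertex $v$ define $f(v)=\sum_{e\in I(v)} f(e)$, where $I(v)$ is the set of edges incident to $v$. For an integer $c$, $e_f(c)$ denotes the number of edges with label $c$, and $v_f(c)$ the number of vertices $v$ with $f(v)=c$. A labeling $f$ of a tree $T$ is semi--H--cordial if $|f(v)|\le 1$ for every vertex $v$, $|e_f(1)-e_f(-1)|\le 1$, and $|v_f(1)-v_f(-1)|\le 1$. A tree is semi--H--cordial if it admits a semi--H--cordial labeling. *)

(* Defs.v *)
From mathcomp Require Import all_boot all_order all_algebra.
Set Implicit Arguments. Unset Strict Implicit. Unset Printing Implicit Defensive.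
Import Order.TTheory GRing.Theory Num.Theory.
Local Open Scope ring_scope.

Definition simple_graph (T : finType) (e : rel T) : Prop :=
  symmetric e /\ irreflexive e.

Definition edges (T : finType) (e : rel T) : {set {set T}} :=
  [set E : {set T} | [exists x, exists y, e x y && (E == [set x; y])]].

Definition is_tree (T : finType) (e : rel T) : Prop :=
  [/\ simple_graph e, (0 < #|T|)%N, (forall x y, connect e x y)
    & #|edges e| = #|T|.-1].

(* A labeling is a map E(G) -> {-1,+1}; we represent it by a function on
   vertex sets whose values on edges are in {-1,+1} (values off edges are
   irrelevant). *)
Definition is_labeling (T : finType) (e : rel T) (f : {set T} -> int) : Prop :=
  forall E, E \in edges e -> f E = 1 \/ f E = -1.

Definition vlabel (T : finType) (e : rel T) (f : {set T} -> int) (v : T) : int :=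
  \sum_(E in edges e | v \in E) f E.

Definition e_f (T : finType) (e : rel T) (f : {set T} -> int) (c : int) : nat :=
  #|[set E in edges e | f E == c]|.

Definition v_f (T : finType) (e : rel T) (f : {set T} -> int) (c : int) : nat :=
  #|[set v : T | vlabel e f v == c]|.

Definition semi_H_cordial_labeling (T : finType) (e : rel T) (f : {set T} -> int) : Prop :=
  [/\ is_labeling e f,
      (forall v, `|vlabel e f v| <= 1),
      `|(e_f e f 1)%:Z - (e_f e f (-1))%:Z| <= 1
    & `|(v_f e f 1)%:Z - (v_f e f (-1))%:Z| <= 1].

Definition semi_H_cordial (T : finType) (e : rel T) : Prop :=
  exists f : {set T} -> int, semi_H_cordial_labeling e f.

(* Main.v *)
Require Import Defs.
From mathcomp Require Import all_boot all_order all_algebra zify.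
Set Implicit Arguments. Unset Strict Implicit. Unset Printing Implicit Defensive.
Import Order.TTheory GRing.Theory Num.Theory.
Local Open Scope ring_scope.

Lemma edge_card (T : finType) (e : rel T) E : simple_graph e -> E \in edges e -> #|E| = 2%N.
Proof.
case=> _ irr; rewrite inE => /existsP [x /existsP [y /andP [exy /eqP ->]]].
rewrite cards2; case: eqP => // xy; by rewrite xy irr in exy.
Qed.

Lemma sum_vlabel (T : finType) (e : rel T) (f : {set T} -> int) : simple_graph e ->
  \sum_v vlabel e f v = (\sum_(E in edges e) f E) *+ 2.
Proof.
move=> sg; rewrite /vlabel.
under eq_bigr => v _ do rewrite big_mkcondr.
rewrite exchange_big /= -sumrMnl; apply: eq_bigr => E EE.
by rewrite -big_mkcond /= sumr_const (edge_card sg EE).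
Qed.

Lemma lab_split (T : finType) (e : rel T) (f : {set T} -> int) (G : int -> int) :
  is_labeling e f ->
  \sum_(E in edges e) G (f E) = G 1 *+ e_f e f 1 + G (-1) *+ e_f e f (-1).
Proof.
move=> lab; rewrite (bigID (fun E => f E == 1)) /= /e_f -!sumr_const.
congr (_ + _); apply: eq_big.
- by move=> E; rewrite inE.
- by move=> E /andP [_ /eqP ->].
- move=> E; rewrite inE; case EE: (E \in edges e) => //=; by case: (lab E EE) => ->.
- by move=> E /andP [EE]; case: (lab E EE) => ->.
Qed.

Lemma vert_split (T : finType) (g : T -> int) : (forall v, `|g v| <= 1) ->
  \sum_v g v = (#|[set v | g v == 1]|)%:Z - (#|[set v | g v == -1]|)%:Z.
Proof.
move=> h; rewrite (bigID (fun v => g v == 1)) /=.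
rewrite [X in _ + X](bigID (fun v => g v == -1)) /=.
rewrite [X in _ + (_ + X)]big1; last first.
  move=> v /andP [h1 h2]; have := h v; move: h1 h2; move: (g v) => t; lia.
rewrite addr0 -!natz -!sumr_const -sumrN; congr (_ + _); apply: eq_big.
- by move=> v; rewrite inE.
- by move=> v /eqP ->.
- by move=> v; rewrite inE; case: eqP => // ->.
- by move=> v /andP [_ /eqP ->].
Qed.

Lemma parent_struct (T : finType) (e : rel T) (r : T) : (forall y, connect e r y) ->
  exists p : T -> T, exists d : T -> nat,
    forall u, u != r -> (d (p u) < d u)%N /\ e (p u) u.
Proof.
move=> conn.
pose step (A : {set T}) := A :|: [set u | [exists w in A, e w u]].
pose D n := iter n step [set r].
have Dpath : forall s x k, x \in D k -> path e x s -> last x s \in D (k + size s)%N.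
  elim=> [|y s IHs] x k xD /=; first by rewrite addn0.
  move=> /andP [exy ps]; rewrite addnS -addSn; apply: IHs => //.
  rewrite /D iterS inE; apply/orP; right; rewrite inE; apply/existsP; exists x; by rewrite xD.
have exD : forall u, exists n, u \in D n.
  move=> u; case/connectP: (conn u) => s ps ->; exists (0 + size s)%N; apply: Dpath => //.
  by rewrite /D /= set11.
have Dmono : forall m k, (m <= k)%N -> D m \subset D k.
  move=> m k /subnK <-; elim: (k - m)%N => [|j IHj]; first by rewrite add0n.
  by apply: subset_trans IHj _; rewrite addSn /D iterS subsetUl.
pose d u := ex_minn (exD u).
have dD : forall u, u \in D (d u) by move=> u; rewrite /d; case: ex_minnP.
have dmin : forall u n, u \in D n -> (d u <= n)%N by move=> u n; rewrite /d; case: ex_minnP => m _ h /h.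
pose p u := odflt r [pick w | (w \in D (d u).-1) && e w u].
exists p, d => u ur.
have dpos : (0 < d u)%N.
  rewrite lt0n; apply/negP => /eqP d0; have := dD u; rewrite d0 /D /= inE; by rewrite (negbTE ur).
rewrite /p; case: pickP => [w /andP [wD ewu] | none] /=.
  split => //; have := dmin w _ wD; lia.
exfalso; have := dD u; rewrite -(prednK dpos) /D iterS -/(D _) inE => /orP [uD | ].
  by have := dmin u _ uD; lia.
rewrite inE => /existsP [w /andP [wD ewu]]; by have := none w; rewrite wD ewu.
Qed.

Lemma edges_param (T : finType) (e : rel T) (r : T) (p : T -> T) (d : T -> nat) :
  simple_graph e -> #|edges e| = #|T|.-1 ->
  (forall u, u != r -> (d (p u) < d u)%N /\ e (p u) u) ->
  {in [set~ r] &, injective (fun u => [set u; p u])} /\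
  edges e = [set [set u; p u] | u in [set~ r]].
Proof.
move=> [sym irr] card H.
have inj : {in [set~ r] &, injective (fun u => [set u; p u])}.
  move=> u u'; rewrite !in_setC1 => ur u'r E.
  case: (eqVneq u u') => // uu'; exfalso.
  have : u \in [set u'; p u'] by rewrite -E set21.
  rewrite in_set2 (negbTE uu') /= => /eqP up.
  have : u' \in [set u; p u] by rewrite E set21.
  rewrite in_set2 eq_sym (negbTE uu') /= => /eqP u'p.
  have := (H u ur).1; have := (H u' u'r).1; rewrite -up -u'p; lia.
split => //; apply/eqP; rewrite eq_sym eqEcard card_in_imset // cardsC1 card leqnn andbT.
apply/subsetP => E /imsetP [u]; rewrite in_setC1 => ur ->.
rewrite inE; apply/existsP; exists (p u); apply/existsP; exists u.
by rewrite (H u ur).2 setUC eqxx.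
Qed.

Theorem easy_dir (T : finType) (e : rel T) :
  is_tree e -> semi_H_cordial e -> odd #|T|.
Proof.
case=> sg npos conn card [f [lab vl ef vf]].
have s1 := lab_split id lab.
have s2 := lab_split (fun _ => 1) lab.
have s3 := sum_vlabel f sg.
have s4 := vert_split vl.
rewrite sumr_const card /= in s2.
rewrite s4 s1 in s3.
move: s2 s3 ef vf npos; rewrite /v_f.
move: (e_f e f 1) (e_f e f (-1)) #|[set v | vlabel e f v == 1]| #|[set v | vlabel e f v == -1]| #|T|.
clear; move=> *; lia.
Qed.
Lemma sum_peel (T : finType) (a : T) (A : {set T}) (P : pred T) (F : T -> int) :
  a \notin A -> \sum_(v in a |: A | P v) F v = (if P a then F a else 0) + \sum_(v in A | P v) F v.
Proof. by move=> aA; rewrite big_mkcondr big_setU1 //= -big_mkcondr. Qed.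

Lemma sum_false (T : finType) (A : {set T}) (Q : pred T) (F : T -> int) :
  (forall v, v \in A -> ~~ Q v) -> \sum_(v in A | Q v) F v = 0.
Proof. by move=> h; rewrite big_mkcondr big1 // => v vA; rewrite (negbTE (h v vA)). Qed.

Lemma norm_le1 (t : int) : `|t| <= 1 -> t = -1 \/ t = 0 \/ t = 1.
Proof. lia. Qed.

Lemma claim (T : finType) (r : T) (p : T -> T) (d : T -> nat)
  (hd : forall u, u != r -> (d (p u) < d u)%N) :
  forall S : {set T}, r \in S -> (forall u, u \in S -> u != r -> p u \in S) -> odd #|S| ->
  exists L : T -> int, (forall v, L v = 1 \/ L v = -1) /\
   (forall u, u \in S -> `|\sum_(v in S | (v != r) && ((v == u) || (p v == u))) L v| <= 1) /\
   \sum_(v in S | v != r) L v = 0.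
Proof.
move=> S; have [n] := ubnP #|S|; elim: n S => // n IH S ltS rS clS oddS.
case: (boolP [exists u in S, u != r]) => [/existsP [u0 /andP [u0S u0r]] | none]; last first.
  have h : forall v, v \in S -> v == r.
    move=> v vS; apply: contraNT none => vr; apply/existsP; exists v; by rewrite vS.
  exists (fun _ => 1); split; first by left.
  split; last by rewrite sum_false // => v /h ->.
  by move=> u uS; rewrite sum_false // => v /h ->.
pose hasch x := [exists c in S, (c != r) && (p c == x)].
have h0 : (p u0 \in S) && hasch (p u0).
  rewrite clS //=; apply/existsP; exists u0; by rewrite u0S u0r eqxx.
case: (@arg_maxnP T (p u0) (fun x => (x \in S) && hasch x) d h0) => w /andP [wS hw] maxw.
have leaf : forall c, c \in S -> c != r -> p c = w -> ~~ hasch c.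
  move=> c cS cr pc; apply/negP => hc.
  have := maxw c; rewrite cS hc => /(_ isT); have := hd c cr; rewrite pc; lia.
have leaf' : forall c y, c \in S -> c != r -> p c = w -> y \in S -> y != r -> p y != c.
  move=> c y cS cr pc yS yr; apply/negP => /eqP pyc; move/negP: (leaf c cS cr pc); apply.
  apply/existsP; exists y; by rewrite yS yr pyc eqxx.
have wr_ch : exists c, [/\ c \in S, c != r & p c = w].
  by case/existsP: hw => c /and3P [cS cr /eqP pc]; exists c.
have ltn2 : forall A : {set T}, (#|A| < n.+1)%N -> forall a b, a \in A -> b \in A -> a != b ->
   (#|A :\ a :\ b| < n)%N /\ (odd #|A :\ a :\ b| = odd #|A|).
  move=> A ltA a b aA bA ab.
  have e1 := cardsD1 a A; have e2 := cardsD1 b (A :\ a).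
  rewrite !inE eq_sym ab bA aA /= in e1 e2; split; lia.
have decomp : forall a b (A : {set T}), a \in A -> b \in A -> a != b -> A = a |: (b |: A :\ a :\ b).
  by move=> a b A aA bA ab; rewrite setD1K ?setD1K // !inE eq_sym ab bA.
have notin1 : forall a b (A : {set T}), a != b -> a \notin b |: A :\ a :\ b.
  by move=> a b A ab; rewrite !inE negb_or ab eqxx.
have notin2 : forall a b (A : {set T}), b \notin A :\ a :\ b.
  by move=> a b A; rewrite !inE eqxx.
case: (ltnP 1 #|[set c in S | (c != r) && (p c == w)]|) => [/card_gt1P | le1].
  case=> a1 [b1 [aC bC ab]]; move: aC bC; rewrite !inE => /and3P [aS ar /eqP pa] /and3P [bS br /eqP pb]; move: a1 b1 ab aS ar pa bS br pb => a b ab aS ar pa bS br pb.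
  have ba : b != a by rewrite eq_sym.
  have [ltS' oddS'] := ltn2 S ltS a b aS bS ab.
  have wa : w != a by apply: contraNneq (leaf a aS ar pa) => <-.
  have wb : w != b by apply: contraNneq (leaf b bS br pb) => <-.
  have defS := decomp a b S aS bS ab.
  set S' := S :\ a :\ b in ltS' oddS' defS.
  have memS' : forall v, v \in S' = [&& v != b, v != a & v \in S] by move=> v; rewrite !inE.
  have r' : r \in S' by rewrite memS' rS eq_sym br eq_sym ar.
  have clS' : forall u, u \in S' -> u != r -> p u \in S'.
    move=> u; rewrite memS' => /and3P [ub ua uS] ur.
    by rewrite memS' clS // (leaf' a u) // (leaf' b u).
  have oS' : odd #|S'| by rewrite oddS'.
  have [L' [L1 [L2 L3]]] := IH S' ltS' r' clS' oS'.
  exists (fun v => if v == a then 1 else if v == b then -1 else L' v).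
  split.
    by move=> v; case: ifP => _; [left | case: ifP => _; [right | apply: L1]].
  have key : forall Q : pred T, \sum_(v in S | Q v) (if v == a then 1 else if v == b then -1 else L' v) = (if Q a then 1 else 0) + ((if Q b then -1 else 0) + \sum_(v in S' | Q v) L' v).
    move=> Q; rewrite {1}defS sum_peel ?notin1 // sum_peel ?notin2 //= eqxx (negbTE ba) eqxx.
    congr (_ + (_ + _)); apply: eq_bigr => v; rewrite memS' => /andP [/and3P [vb va _] _].
    by rewrite (negbTE va) (negbTE vb).
  split; last by rewrite key ar br L3.
  move=> u uS; rewrite key.
  case: (eqVneq u a) => [-> | ua].
    rewrite /= ar /= pb (negbTE ba) (negbTE wa) /= sum_false; first by rewrite andbF.
    move=> v; rewrite memS' => /and3P [vb va vS]; apply/negP => /andP [vr /orP [/eqP vu| pv]].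
      by rewrite vu eqxx in va.
    by move: (leaf' a v aS ar pa vS vr); rewrite pv.
  case: (eqVneq u b) => [-> | ub].
    rewrite /= br /= pa (negbTE wb) andbF sum_false; first by [].
    move=> v; rewrite memS' => /and3P [vb va vS]; apply/negP => /andP [vr /orP [/eqP vu| pv]].
      by rewrite vu eqxx in vb.
    by move: (leaf' b v bS br pb vS vr); rewrite pv.
  have uS' : u \in S' by rewrite memS' ua ub uS.
  rewrite /= ar br pa pb /=.
  case: (w == u); last by rewrite !add0r; apply: L2.
  by rewrite addrA addrN add0r; apply: L2.
have [v defC] : exists v, [set c in S | (c != r) && (p c == w)] = [set v].
  apply/cards1P; rewrite eqn_leq le1 /=; apply/card_gt0P.
  by case: wr_ch => c [cS cr pc]; exists c; rewrite !inE cS cr pc eqxx.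
have onlyv : forall c, c \in S -> c != r -> p c = w -> c = v.
  by move=> c cS cr pc; apply/set1P; rewrite -defC !inE cS cr pc eqxx.
have : v \in [set c in S | (c != r) && (p c == w)] by rewrite defC set11.
rewrite !inE => /and3P [vS vr /eqP pv].
have lv := leaf v vS vr pv.
have lv' : forall y, y \in S -> y != r -> p y != v := fun y => leaf' v y vS vr pv.
have wv : w != v by apply: contraNneq lv => <-.
have vw : v != w by rewrite eq_sym.
case: (eqVneq w r) => [wr | wr].
  have rv : r != v by rewrite eq_sym.
  have [ltS' oddS'] := ltn2 S ltS r v rS vS rv.
  have : (0 < #|S :\ r :\ v|)%N.
    by rewrite lt0n; apply/negP => /eqP h; rewrite h oddS in oddS'.
  case/card_gt0P => m0 m0in.
  case: (@arg_minnP T m0 (fun x => x \in S :\ r :\ v) d m0in) => m mIn minm.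
  move: mIn; rewrite !inE => /and3P [mv mr mS].
  have pmS : p m \in S :\ r :\ v.
    rewrite !inE clS // andbT lv' // andTb; apply/negP => /eqP pmr.
    by move: mv; rewrite (onlyv m mS mr) ?eqxx // pmr wr.
  by have := leq_trans (hd m mr) (minm _ pmS); rewrite ltnn.
have [ltS' oddS'] := ltn2 S ltS v w vS wS vw.
have defS := decomp v w S vS wS vw.
set S' := S :\ v :\ w in ltS' oddS' defS.
have memS' : forall y, y \in S' = [&& y != w, y != v & y \in S] by move=> y; rewrite !inE.
have r' : r \in S' by rewrite memS' rS eq_sym wr eq_sym vr.
have clS' : forall u, u \in S' -> u != r -> p u \in S'.
  move=> u; rewrite memS' => /and3P [uw uv uS] ur.
  rewrite memS' clS // lv' // !andbT; apply/eqP => puw.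
  by move: uv; rewrite (onlyv u uS ur puw) eqxx.
have oS' : odd #|S'| by rewrite oddS'.
have [L' [L1 [L2 L3]]] := IH S' ltS' r' clS' oS'.
set x := p w.
have xS' : x \in S'.
  rewrite memS' clS // lv' // !andbT; apply/eqP => xw.
  by have := hd w wr; rewrite -/x xw ltnn.
set t := \sum_(y in S' | (y != r) && ((y == x) || (p y == x))) L' y.
have xv : x != v := lv' w wS wr.
have ht : `|t| <= 1 := L2 x xS'.
set a : int := if t == 1 then -1 else 1.
have ha : a = 1 \/ a = -1 by rewrite /a; case: ifP => _; [right|left].
exists (fun y => if y == v then -a else if y == w then a else L' y).
split.
  move=> y; case: ifP => _; first by case: ha => ->; [right | left].
  by case: ifP => _; [ | apply: L1].
have key : forall Q : pred T, \sum_(y in S | Q y) (if y == v then -a else if y == w then a else L' y) = (if Q v then -a else 0) + ((if Q w then a else 0) + \sum_(y in S' | Q y) L' y).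
  move=> Q; rewrite {1}defS sum_peel ?notin1 // sum_peel ?notin2 //= eqxx (negbTE wv) eqxx.
  congr (_ + (_ + _)); apply: eq_bigr => y; rewrite memS' => /andP [/and3P [yw yv _] _].
  by rewrite (negbTE yv) (negbTE yw).
split; last by rewrite key vr wr L3 addr0 addNr.
move=> u uS; rewrite key.
case: (eqVneq u v) => [-> | uv].
  rewrite /= vr /= (negbTE wv) (negbTE xv) /= sum_false.
    by rewrite andbF !addr0 normrN; case: ha => ->.
  move=> y; rewrite memS' => /and3P [yw yv yS]; apply/negP => /andP [yr /orP [/eqP yu| py]].
    by rewrite yu eqxx in yv.
  by move: (lv' y yS yr); rewrite py.
case: (eqVneq u w) => [-> | uw].
  rewrite /= vr wr pv eqxx /= sum_false; first by rewrite addr0 addNr.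
  move=> y; rewrite memS' => /and3P [yw yv yS]; apply/negP => /andP [yr /orP [/eqP yu| /eqP py]].
    by rewrite yu eqxx in yw.
  by move: yv; rewrite (onlyv y yS yr py) eqxx.
have uS' : u \in S' by rewrite memS' uv uw uS.
rewrite /= vr wr pv /=.
rewrite (eq_sym w u) (negbTE uw) add0r -/x.
case: (eqVneq x u) => [xu | xu]; last by rewrite add0r; apply: L2.
rewrite -xu -/t /a; move: ht; case: eqP => [-> | tn1] ht; first by [].
by case: (norm_le1 ht) tn1 => [|[]] ->.
Qed.

Theorem theorem1 (T : finType) (e : rel T) :
  is_tree e -> (semi_H_cordial e <-> odd #|T|).
Proof.
move=> tr; split; first exact: easy_dir.
case: tr => sg npos conn card oT.
case/card_gt0P: npos => r _.
have [p [d H]] := parent_struct (conn r).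
have [inj Eed] := edges_param sg card H.
have hd : forall u, u != r -> (d (p u) < d u)%N := fun u ur => (H u ur).1.
have oT' : odd #|[set: T]| by rewrite cardsT.
have [L [L1 [L2 L3]]] := claim hd (in_setT r) (fun u _ _ => in_setT (p u)) oT'.
pose f E := \sum_(u in [set~ r] | E == [set u; p u]) L u.
have fphi : forall u, u != r -> f [set u; p u] = L u.
  move=> u ur; rewrite /f (big_pred1 u) // => j /=; rewrite in_setC1.
  case: (eqVneq j u) => [-> | ju]; first by rewrite ur eqxx.
  apply/negbTE/negP => /andP [jr /eqP E]; move: ju.
  by rewrite (inj j u) ?eqxx // in_setC1.
have vlE : forall x, vlabel e f x = \sum_(v in [set: T] | (v != r) && ((v == x) || (p v == x))) L v.
  move=> x; rewrite /vlabel Eed big_mkcondr big_imset //=.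
  rewrite [RHS](eq_bigl (fun v => (v \in [set~ r]) && ((v == x) || (p v == x)))); last first.
    by move=> v; rewrite in_setT in_setC1.
  rewrite [RHS]big_mkcondr; apply: eq_bigr => v; rewrite in_setC1 => vr.
  by rewrite fphi // in_set2 (eq_sym x v) (eq_sym x (p v)).
have sumE : \sum_(E in edges e) f E = 0.
  rewrite Eed big_imset //= (eq_bigr L); last by move=> v; rewrite in_setC1; apply: fphi.
  by rewrite -[RHS]L3; apply: eq_bigl => v; rewrite in_setT in_setC1.
have lab : is_labeling e f.
  by move=> E; rewrite Eed => /imsetP [u]; rewrite in_setC1 => ur ->; rewrite fphi //; apply: L1.
have vl : forall v, `|vlabel e f v| <= 1.
  by move=> x; rewrite vlE; apply: L2; rewrite in_setT.
exists f; split => //.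
  have := lab_split id lab; rewrite sumE /=.
  move: (e_f e f 1) (e_f e f (-1)); clear; move=> *; lia.
have := sum_vlabel f sg; rewrite sumE (vert_split vl) /v_f.
move: #|[set v | vlabel e f v == 1]| #|[set v | vlabel e f v == -1]|; clear; move=> *; lia.
Qed.
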